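(* Suppose $F_0$ has a unique fixed point $\bar x$ in $V$, and that for some $m\ge0$ the map $F_m$ is monotone (nondecreasing or nonincreasing) in each of its arguments. Let $F_m^*$, the monotonicity types, $\le_\tau$, $P_\tau$, $P_\tau^t$ be as in the context, and assume: $F_m^*$ has a unique fixed point; $F_m^*$ has no pseudo-fixed points; and for every initial condition $X_0\in V^{k+m}$ there exist $x,y\in V$ with $$x\le y,\quad x<F_m^*(P_\tau(x,y)),\quad F_m^*(P_\tau^t(x,y))<y,\quad P_\tau(x,y)\le_\tau X_0\le_\tau P_\tau^t(x,y).$$ Then $\bar x$ is a global attractor of $x_{n+1}=F_0(x_n,\dots,x_{n-k+1})$: every solution with initial values in $V$ converges to $\bar x$.
   Context: Let $k\ge 2$, $V\subseteq\mathbb{R}$ be $\mathbb{R}$ or $[0,\infty)$, and $F_0:V^k\to V$ continuous. Define $F_m:V^k\to V$ recursively by $F_{m+1}(u_1,\dots,u_k)=F_m(F_0(u_1,\dots,u_k),u_1,\dots,u_{k-1})$; the $F_m$-equation is $z_{n+1}=F_m(z_{n-m},\dots,z_{n-m-k+1})$. Define $F_m^*:V^{k+m}\to V$ by $F_m^*(u_1,\dots,u_{k+m})=F_m(u_{m+1},\dots,u_{m+k})$, so the $F_m$-equation reads $z_{n+1}=F_m^*(z_n,\dots,z_{n-m-k+1})$, with initial condition $X_0=(z_0,z_{-1},\dots,z_{-m-k+1})\in V^{k+m}$. To each coordinate $i\in\{1,\dots,k+m\}$ assign a type ''increasing'' or ''decreasing'' such that $F_m^*$ is nondecreasing (resp.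 nonincreasing) in its $i$-th argument when the type is increasing (resp. decreasing); for the first $m$ coordinates, on which $F_m^*$ is constant, any type may be assigned. The partial order $\le_\tau$ on $V^{k+m}$: $(x_1,\dots,x_{k+m})\le_\tau(y_1,\dots,y_{k+m})$ iff $x_i\le y_i$ for coordinates of increasing type and $x_i\ge y_i$ for coordinates of decreasing type. For $x,y\in V$, $P_\tau(x,y)=(u_1,\dots,u_{k+m})$ with $u_i=x$ for increasing-type coordinates and $u_i=y$ for decreasing-type coordinates, and $P_\tau^t(x,y)$ is obtained by interchanging $x$ and $y$. A pseudo-fixed point of $F_m^*$ is a pair $(x,y)\in V^2$ with $x\ne y$, $x=F_m^*(P_\tau(x,y))$ and $y=F_m^*(P^t_\tau(x,y))$. A fixed point of $F_m^*$ is $x$ with $F_m^*(x,\dots,x)=x$. *)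

(* Defs.v *)
From mathcomp Require Import all_boot all_order all_algebra.
From mathcomp Require Import reals.
Set Implicit Arguments. Unset Strict Implicit. Unset Printing Implicit Defensive.
Import Order.TTheory GRing.Theory Num.Theory.
Local Open Scope ring_scope.

Section Defs.
Variable R : realType.

(* The domain V: V = R if nonneg = false, V = [0,oo) if nonneg = true. *)
Definition inV (nonneg : bool) (x : R) : Prop := if nonneg then (0 <= x)%R : Prop else True.

(* Extend a k-tuple (indexed by 'I_k, index 0 = first argument u_1) to nat. *)
Definition ext (k : nat) (u : 'I_k -> R) (j : nat) : R :=
  if insub j is Some i then u i else 0.

(* (a, u_1, ..., u_{k-1}) *)
Definition shiftcons (k : nat) (a : R) (u : 'I_k -> R) : 'I_k -> R :=
  fun i => if val i is j.+1 then ext u j else a.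

Fixpoint Fm (k : nat) (F0 : ('I_k -> R) -> R) (m : nat) : ('I_k -> R) -> R :=
  match m with
  | 0 => F0
  | m'.+1 => fun u => Fm F0 m' (shiftcons (F0 u) u)
  end.

(* F_m^*(u_1, ..., u_{m+k}) = F_m(u_{m+1}, ..., u_{m+k}). *)
Definition Fstar (k : nat) (F0 : ('I_k -> R) -> R) (m : nat) (u : 'I_(m + k) -> R) : R :=
  Fm F0 m (fun i : 'I_k => u (rshift m i)).

(* type assignment: tau i = true means "increasing", false "decreasing" *)
Definition le_tau (n : nat) (tau : 'I_n -> bool) (x y : 'I_n -> R) : Prop :=
  forall i, if tau i then x i <= y i else y i <= x i.

Definition P_tau (n : nat) (tau : 'I_n -> bool) (x y : R) : 'I_n -> R :=
  fun i => if tau i then x else y.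

Definition Pt_tau (n : nat) (tau : 'I_n -> bool) (x y : R) : 'I_n -> R :=
  P_tau tau y x.

Definition monotone_in_arg (nonneg : bool) (n : nat) (G : ('I_n -> R) -> R)
  (i : 'I_n) (incr : bool) : Prop :=
  forall u v : 'I_n -> R, (forall j, inV nonneg (u j)) -> (forall j, inV nonneg (v j)) ->
    (forall j, j != i -> u j = v j) -> u i <= v i ->
    if incr then G u <= G v else G v <= G u.

Definition continuous_on_V (nonneg : bool) (n : nat) (G : ('I_n -> R) -> R) : Prop :=
  forall u, (forall j, inV nonneg (u j)) ->
  forall eps : R, 0 < eps -> exists2 delta : R, 0 < delta &
    forall v, (forall j, inV nonneg (v j)) -> (forall j, `|v j - u j| < delta) ->
      `|G v - G u| < eps.

Definition is_pseudo_fixed_point (nonneg : bool) (n : nat) (G : ('I_n -> R) -> R)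
  (tau : 'I_n -> bool) (x y : R) : Prop :=
  inV nonneg x /\ inV nonneg y /\ x <> y /\ x = G (P_tau tau x y) /\ y = G (Pt_tau tau x y).

(* x : nat -> R encodes a solution: x 0, ..., x (k-1) are x_{-k+1}, ..., x_0 *)
Definition is_solution (nonneg : bool) (k : nat) (F0 : ('I_k -> R) -> R) (x : nat -> R) : Prop :=
  (forall j, (j < k)%N -> inV nonneg (x j)) /\
  forall n, x (n + k)%N = F0 (fun i : 'I_k => x (n + k - 1 - i)%N).

Definition converges_to (x : nat -> R) (l : R) : Prop :=
  forall eps : R, 0 < eps -> exists N, forall n, (N <= n)%N -> `|x n - l| < eps.

End Defs.

(* Main.v *)
Require Import Defs.
From mathcomp Require Import all_boot all_order all_algebra.
From mathcomp Require Import classical_sets reals.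
From Stdlib Require Import FunctionalExtensionality.
From mathcomp Require Import zify ring lra.
Set Implicit Arguments. Unset Strict Implicit.
Import Order.TTheory GRing.Theory Num.Theory.
Local Open Scope ring_scope.

Lemma ext_lt (R : realType) k (u : 'I_k -> R) j (H : (j < k)%N) : ext u j = u (Ordinal H).
Proof. by rewrite /ext insubT. Qed.

Lemma ext_ge (R : realType) k (u : 'I_k -> R) j : (k <= j)%N -> ext u j = 0.
Proof. by move=> H; rewrite /ext insubN // -leqNgt. Qed.

Lemma inV0 (R : realType) nonneg : inV nonneg (0:R).
Proof. by rewrite /inV; case: nonneg. Qed.

Lemma shiftcons_V (R : realType) nonneg k (a : R) (u : 'I_k -> R) :
  inV nonneg a -> (forall j, inV nonneg (u j)) -> forall j, inV nonneg (shiftcons a u j).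
Proof.
move=> Ha Hu [[|j] Hj]; rewrite /shiftcons //=.
case: (ltnP j k) => H; first by rewrite (ext_lt u H).
by rewrite ext_ge //; exact: inV0.
Qed.

Lemma Fm_V (R : realType) nonneg k (F0 : ('I_k -> R) -> R) :
  (forall u, (forall j, inV nonneg (u j)) -> inV nonneg (F0 u)) ->
  forall m u, (forall j, inV nonneg (u j)) -> inV nonneg (Fm F0 m u).
Proof.
move=> HF; elim=> [|m IH] u Hu /=; first exact: HF.
by apply: IH; apply: shiftcons_V => //; apply: HF.
Qed.

Lemma Fm_const (R : realType) k (F0 : ('I_k -> R) -> R) z :
  F0 (fun _ => z) = z -> forall m, Fm F0 m (fun _ => z) = z.
Proof.
move=> HF; elim=> [|m IH] //=.
rewrite HF; have -> : shiftcons z (fun _ : 'I_k => z) = (fun _ => z); last by [].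
apply: functional_extensionality => -[[|j] Hj]; rewrite /shiftcons //=.
have Hjk : (j < k)%N by apply: ltn_trans Hj.
by rewrite (ext_lt _ Hjk).
Qed.

Lemma Fm_cont (R : realType) nonneg k (F0 : ('I_k -> R) -> R) :
  (forall u, (forall j, inV nonneg (u j)) -> inV nonneg (F0 u)) ->
  continuous_on_V nonneg F0 -> forall m, continuous_on_V nonneg (Fm F0 m).
Proof.
move=> HV HC; elim=> [|m IH] //= u Hu eps He.
have HSu := shiftcons_V (HV u Hu) Hu.
have [d1 Hd1 H1] := IH _ HSu eps He.
have [d2 Hd2 H2] := HC u Hu d1 Hd1.
exists (Num.min d1 d2); first by rewrite lt_min Hd1 Hd2.
move=> v Hv Hvu /=; apply: H1; first exact: shiftcons_V (HV v Hv) Hv.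
have Hvu1 i : `|v i - u i| < d1 by move: (Hvu i); rewrite lt_min => /andP[].
have Hvu2 i : `|v i - u i| < d2 by move: (Hvu i); rewrite lt_min => /andP[].
move=> [[|j] Hj]; rewrite /shiftcons /=; first exact: H2.
case: (ltnP j k) => H; first by rewrite !(ext_lt _ H).
by rewrite !ext_ge // subrr normr0.
Qed.

Lemma Fstar_mono (R : realType) nonneg k (F0 : ('I_k -> R) -> R) m (tau : 'I_(m + k) -> bool) :
  (forall i : 'I_(m + k), (m <= i)%N -> monotone_in_arg nonneg (@Fstar R k F0 m) i (tau i)) ->
  forall U W : 'I_(m + k) -> R, (forall i, inV nonneg (U i)) -> (forall i, inV nonneg (W i)) ->
  le_tau tau U W -> Fstar F0 U <= Fstar F0 W.
Proof.
move=> Hmono U W HU HW Hle.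
pose H t := fun i : 'I_(m + k) => if (i < t)%N then W i else U i.
have HV t i : inV nonneg (H t i) by rewrite /H; case: ifP.
have step t : Fstar F0 (H t) <= Fstar F0 (H t.+1).
  case: (ltnP t (m + k)) => Ht; last first.
    have -> : H t = H t.+1; last by [].
    apply: functional_extensionality => i; rewrite /H.
    have h1 : (i < t)%N by apply: leq_trans (ltn_ord i) Ht.
    by rewrite h1 ltnS ltnW.
  pose i0 := Ordinal Ht.
  have Hdiff j : j != i0 -> H t j = H t.+1 j.
    move=> Hj; have Hjt : (j : nat) != t.
      by apply: contra Hj => /eqP E; apply/eqP/val_inj.
    by rewrite /H; have -> : (j < t.+1)%N = (j < t)%N by rewrite ltnS leq_eqVlt (negbTE Hjt).
  case: (ltnP t m) => Htm.
    have -> : Fstar F0 (H t) = Fstar F0 (H t.+1); last by [].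
    rewrite /Fstar; congr (Fm F0 m _); apply: functional_extensionality => i; rewrite /H /=.
    have h1 : (t < m + i)%N by apply: leq_trans Htm (leq_addr _ _).
    by rewrite ltnNge (ltnW h1) /= ltnNge h1.
  have Hi0 : H t i0 = U i0 by rewrite /H /= ltnn.
  have Hi0' : H t.+1 i0 = W i0 by rewrite /H /= ltnSn.
  have := Hle i0; have := Hmono i0 Htm.
  case E: (tau i0) => Hm Hl.
    by apply: (Hm (H t) (H t.+1)) => //; rewrite Hi0 Hi0'.
  apply: (Hm (H t.+1) (H t)) => //; last by rewrite Hi0 Hi0'.
  by move=> j Hj; rewrite Hdiff.
have mono_all t : Fstar F0 (H 0%N) <= Fstar F0 (H t).
  by elim: t => [|t IH] //; apply: le_trans IH (step t).
have -> : U = H 0%N by apply: functional_extensionality => i; rewrite /H.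
have -> : W = H (m + k)%N by apply: functional_extensionality => i; rewrite /H ltn_ord.
exact: mono_all.
Qed.

Lemma sol_Fm (R : realType) nonneg k (F0 : ('I_k -> R) -> R) x :
  is_solution nonneg F0 x ->
  forall m n, Fm F0 m (fun i : 'I_k => x (n + k - 1 - i)%N) = x (n + m + k)%N.
Proof.
move=> [_ Hs]; elim=> [|m IH] n /=; first by rewrite addn0 Hs.
have -> : shiftcons (F0 (fun i : 'I_k => x (n + k - 1 - i)%N)) (fun i : 'I_k => x (n + k - 1 - i)%N)
   = (fun i : 'I_k => x (n.+1 + k - 1 - i)%N).
  apply: functional_extensionality => -[[|j] Hj]; rewrite /shiftcons /=.
    by rewrite -Hs; congr x; lia.
  have Hjk : (j < k)%N by apply: ltn_trans Hj.
  by rewrite (ext_lt _ Hjk) /=; congr x; lia.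
by rewrite IH; congr x; lia.
Qed.

Lemma sol_V (R : realType) nonneg k (F0 : ('I_k -> R) -> R) x :
  (forall u, (forall j, inV nonneg (u j)) -> inV nonneg (F0 u)) ->
  is_solution nonneg F0 x -> forall n, inV nonneg (x n).
Proof.
move=> HV [H0 Hs]; elim/ltn_ind => n IH.
case: (ltnP n k) => Hn; first exact: H0.
have -> : n = ((n - k) + k)%N by rewrite subnK.
rewrite Hs; apply: HV => i; apply: IH; move: (ltn_ord i); lia.
Qed.

Lemma incr_lim (R : realType) (s : nat -> R) B : (forall j, s j <= B) ->
  exists L, (forall j, s j <= L) /\ (forall c, (forall j, s j <= c) -> L <= c) /\
    (forall eps, 0 < eps -> exists j, L - eps < s j).
Proof.
move=> HB.
pose E : set R := fun y => exists j, y = s j.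
have hs : has_sup E.
  split; first by exists (s 0%N); exists 0%N.
  by exists B => y [j ->].
have Hub := sup_upper_bound hs.
have Hup j : s j <= sup E by apply: Hub; exists j.
have Had eps : 0 < eps -> exists j, sup E - eps < s j.
  by move=> He; have [e [j ->] Hj] := sup_adherent He hs; exists j.
exists (sup E); split => //; split => // c Hc.
rewrite leNgt; apply/negP => Hlt.
have [j Hj] : exists j, sup E - (sup E - c) < s j by apply: Had; rewrite subr_gt0.
have := Hc j; rewrite leNgt; move/negP; apply.
by move: Hj; rewrite opprB addrCA subrr addr0.
Qed.

Lemma le_P_P (R : realType) n (tau : 'I_n -> bool) (a b a' b' : R) :
  a <= a' -> b' <= b -> le_tau tau (P_tau tau a b) (P_tau tau a' b').
Proof. by move=> h1 h2 i; rewrite /P_tau; case: (tau i). Qed.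

Lemma le_P_Pt (R : realType) n (tau : 'I_n -> bool) (a b : R) :
  a <= b -> le_tau tau (P_tau tau a b) (Pt_tau tau a b).
Proof. by move=> h i; rewrite /Pt_tau /P_tau; case: (tau i). Qed.

Lemma band_le (R : realType) n (tau : 'I_n -> bool) (a b : R) X :
  (forall i, a <= X i /\ X i <= b) ->
  le_tau tau (P_tau tau a b) X /\ le_tau tau X (Pt_tau tau a b).
Proof.
by move=> h; split=> i; rewrite /Pt_tau /P_tau; case: (tau i); case: (h i).
Qed.

Lemma le_band (R : realType) n (tau : 'I_n -> bool) (a b : R) X :
  le_tau tau (P_tau tau a b) X -> le_tau tau X (Pt_tau tau a b) ->
  forall i, a <= X i /\ X i <= b.
Proof.
move=> h1 h2 i; move: (h1 i) (h2 i); rewrite /Pt_tau /P_tau.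
by case: (tau i).
Qed.

Lemma P_V (R : realType) nonneg n (tau : 'I_n -> bool) (a b : R) :
  inV nonneg a -> inV nonneg b -> forall i, inV nonneg (P_tau tau a b i).
Proof. by move=> h1 h2 i; rewrite /P_tau; case: (tau i). Qed.

Lemma inV_le (R : realType) nonneg (a b : R) : inV nonneg a -> a <= b -> inV nonneg b.
Proof. by rewrite /inV; case: nonneg => // h1 h2; apply: le_trans h2. Qed.

Lemma Fstar_V (R : realType) nonneg k (F0 : ('I_k -> R) -> R) m :
  (forall u, (forall j, inV nonneg (u j)) -> inV nonneg (F0 u)) ->
  forall u : 'I_(m + k) -> R, (forall j, inV nonneg (u j)) -> inV nonneg (Fstar F0 u).
Proof. by move=> HV u Hu; apply: Fm_V. Qed.

Lemma Fstar_cont (R : realType) nonneg k (F0 : ('I_k -> R) -> R) m :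
  (forall u, (forall j, inV nonneg (u j)) -> inV nonneg (F0 u)) ->
  continuous_on_V nonneg F0 -> continuous_on_V nonneg (@Fstar R k F0 m).
Proof.
move=> HV HC u Hu eps He.
have [d Hd H] := Fm_cont HV HC m (fun i => Hu (rshift m i)) He.
exists d => // v Hv Hvu; apply: H => // i.
Qed.
Theorem mainTheorem9 (R : realType) (nonneg : bool) (k : nat) (F0 : ('I_k -> R) -> R)
  (xbar : R) (m : nat) (tau : 'I_(m + k) -> bool) :
  (2 <= k)%N ->
  (forall u, (forall j, inV nonneg (u j)) -> inV nonneg (F0 u)) ->
  continuous_on_V nonneg F0 ->
  (* F0 has the unique fixed point xbar in V *)
  inV nonneg xbar -> F0 (fun _ => xbar) = xbar ->
  (forall z, inV nonneg z -> F0 (fun _ => z) = z -> z = xbar) ->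
  (* the types tau are compatible with the monotonicity of F_m^* *)
  (forall i : 'I_(m + k), (m <= i)%N -> monotone_in_arg nonneg (@Fstar R k F0 m) i (tau i)) ->
  (* F_m^* has a unique fixed point *)
  (exists z, inV nonneg z /\ Fstar F0 (fun _ : 'I_(m + k) => z) = z) ->
  (forall z1 z2, inV nonneg z1 -> inV nonneg z2 ->
     Fstar F0 (fun _ : 'I_(m + k) => z1) = z1 -> Fstar F0 (fun _ : 'I_(m + k) => z2) = z2 ->
     z1 = z2) ->
  (* F_m^* has no pseudo-fixed points *)
  (forall x y, ~ is_pseudo_fixed_point nonneg (@Fstar R k F0 m) tau x y) ->
  (forall X0 : 'I_(m + k) -> R, (forall i, inV nonneg (X0 i)) ->
     exists x y, inV nonneg x /\ inV nonneg y /\ x <= y /\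
       x < Fstar F0 (P_tau tau x y) /\ Fstar F0 (Pt_tau tau x y) < y /\
       le_tau tau (P_tau tau x y) X0 /\ le_tau tau X0 (Pt_tau tau x y)) ->
  forall x : nat -> R, is_solution nonneg F0 x -> converges_to x xbar.
Proof.
move=> Hk HV HC HxV Hfix _ Hmono _ Huniq2 Hnop Hinit x Hsol.
have xV := sol_V HV Hsol.
have mono := Fstar_mono Hmono.
pose K := (m + k)%N.
pose X n := fun i : 'I_(m + k) => x (n + K - 1 - i)%N.
have XV n i : inV nonneg (X n i) by apply: xV.
have HX n : x (n + K)%N = Fstar F0 (X n).
  rewrite /K addnA -(sol_Fm Hsol m n) /Fstar; congr (Fm F0 m _).
  by apply: functional_extensionality => i; rewrite /X /K /=; congr x; lia.
have [a [b [aV [bV [Hab [Ha1 [Hb1 [HP1 HP2]]]]]]]] := Hinit (X 0%N) (XV 0%N).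
pose g (p : R * R) := (Fstar F0 (P_tau tau p.1 p.2), Fstar F0 (Pt_tau tau p.1 p.2)).
pose A j := (iter j g (a, b)).1.
pose B j := (iter j g (a, b)).2.
have AS j : A j.+1 = Fstar F0 (P_tau tau (A j) (B j)) by [].
have BS j : B j.+1 = Fstar F0 (Pt_tau tau (A j) (B j)) by [].
have inv j : [/\ inV nonneg (A j), inV nonneg (B j), A j <= B j, A j <= A j.+1 & B j.+1 <= B j].
  elim: j => [|j [h1 h2 h3 h4 h5]].
    split => //; [exact: ltW | exact: ltW].
  have h1' : inV nonneg (A j.+1) by rewrite AS; apply: Fstar_V => //; apply: P_V.
  have h2' : inV nonneg (B j.+1) by rewrite BS; apply: Fstar_V => //; apply: P_V.
  have HPV := P_V tau h1 h2; have HPV' := P_V tau h1' h2'.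
  have HPtV := P_V tau h2 h1; have HPtV' := P_V tau h2' h1'.
  split => //.
  - rewrite AS BS; apply: mono => //; exact: le_P_Pt.
  - rewrite (AS j.+1) (AS j); apply: mono => //; exact: le_P_P.
  - rewrite (BS j.+1) (BS j); apply: mono => //; exact: le_P_P.
have Aup i d : A i <= A (i + d)%N.
  elim: d => [|d IH]; first by rewrite addn0.
  by apply: le_trans IH _; rewrite addnS; case: (inv (i + d)%N).
have Bdn i d : B (i + d)%N <= B i.
  elim: d => [|d IH]; first by rewrite addn0.
  by apply: le_trans _ IH; rewrite addnS; case: (inv (i + d)%N).
have Amono i j : (i <= j)%N -> A i <= A j by move=> h; rewrite -(subnKC h).
have Bmono i j : (i <= j)%N -> B j <= B i by move=> h; rewrite -(subnKC h).
have AB i j : A i <= B j.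
  apply: le_trans (Amono i (maxn i j) (leq_maxl _ _)) _.
  apply: le_trans _ (Bmono j (maxn i j) (leq_maxr _ _)).
  by case: (inv (maxn i j)).
have [L [LA [Lleast Ladh]]] := incr_lim (fun j => AB j 0%N).
have HnB j : - B j <= - A 0%N by rewrite lerN2.
have [L' [LB [Lleast' Ladh']]] := incr_lim HnB.
pose U := - L'.
have UB j : U <= B j by rewrite /U lerNl; apply: LB.
have AU j : A j <= U by rewrite /U lerNr; apply: Lleast' => i; rewrite lerN2.
have LU : L <= U by apply: Lleast.
have LV : inV nonneg L by apply: inV_le (LA 0%N); case: (inv 0%N).
have UV : inV nonneg U by apply: inV_le LU.
have close d : 0 < d -> exists j, L - d < A j /\ B j < U + d.
  move=> Hd; have [j1 h1] := Ladh d Hd; have [j2 h2] := Ladh' d Hd.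
  exists (maxn j1 j2); split.
    exact: lt_le_trans h1 (Amono _ _ (leq_maxl _ _)).
  apply: le_lt_trans (Bmono _ _ (leq_maxr _ _)) _.
  rewrite /U; lra.
have Fcont := Fstar_cont (m := m) HV HC.
have epsle (y z : R) : (forall eps, 0 < eps -> y < z + eps) -> y <= z.
  move=> h; rewrite leNgt; apply/negP => hlt.
  have := h (y - z); rewrite subr_gt0 => /(_ hlt); lra.
have near (Q : R -> R -> 'I_(m + k) -> R) :
   (forall i, (forall c d, Q c d i = c) \/ (forall c d, Q c d i = d)) ->
   (forall c d, inV nonneg c -> inV nonneg d -> forall i, inV nonneg (Q c d i)) ->
   forall eps, 0 < eps -> exists j,
     `|Fstar F0 (Q (A j) (B j)) - Fstar F0 (Q L U)| < eps.
  move=> HQ HQV eps He.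
  have [d Hd Hc] := Fcont (Q L U) (HQV _ _ LV UV) eps He.
  have [j [h1 h2]] := close d Hd; exists j.
  have [hA1 hA2 _ _ _] := inv j.
  apply: Hc; first exact: HQV.
  move=> i; have hj1 := LA j; have hj2 := UB j.
  by case: (HQ i) => h; rewrite !h ltr_norml; apply/andP; split; lra.
have HPQ : forall i : 'I_(m + k), (forall c d : R, P_tau tau c d i = c) \/ (forall c d : R, P_tau tau c d i = d).
  by move=> i; rewrite /P_tau; case: (tau i); [left|right].
have HPtQ : forall i : 'I_(m + k), (forall c d : R, Pt_tau tau c d i = c) \/ (forall c d : R, Pt_tau tau c d i = d).
  by move=> i; rewrite /Pt_tau /P_tau; case: (tau i); [right|left].
have PVg : forall c d : R, inV nonneg c -> inV nonneg d -> forall i, inV nonneg (P_tau tau c d i).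
  by move=> c d hc hd; exact: (P_V tau hc hd).
have PtVg : forall c d : R, inV nonneg c -> inV nonneg d -> forall i, inV nonneg (Pt_tau tau c d i).
  by move=> c d hc hd; exact: (P_V tau hd hc).
have fixL : L = Fstar F0 (P_tau tau L U).
  apply/eqP; rewrite eq_le; apply/andP; split.
    apply: Lleast => j; have [hA hB _ h4 _] := inv j.
    apply: le_trans h4 _; rewrite AS; apply: mono; [exact: PVg | exact: PVg | ].
    exact: le_P_P (LA j) (UB j).
  apply: epsle => eps He; have [j hj] := near _ HPQ PVg eps He.
  have := LA j.+1; rewrite AS; move: hj; rewrite ltr_norml => /andP[h1 h2] h3; lra.
have fixU : U = Fstar F0 (Pt_tau tau L U).
  apply/eqP; rewrite eq_le; apply/andP; split; last first.
    have : L' <= - Fstar F0 (Pt_tau tau L U).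
      apply: Lleast' => j; rewrite lerN2; have [hA hB _ _ h5] := inv j.
      apply: le_trans _ h5; rewrite BS; apply: mono; [exact: PtVg | exact: PtVg | ].
      exact: le_P_P (UB j) (LA j).
    rewrite /U; lra.
  apply: epsle => eps He; have [j hj] := near _ HPtQ PtVg eps He.
  have := UB j.+1; rewrite BS; move: hj; rewrite ltr_norml => /andP[h1 h2] h3; lra.
have LeqU : L = U.
  apply/eqP; apply/negPn/negP => hne; apply: (Hnop L U).
  by split; [|split; [|split; [apply/eqP|split]]].
have Lx : L = xbar.
  apply: Huniq2 => //.
    have -> : (fun _ : 'I_(m + k) => L) = P_tau tau L U.
      by apply: functional_extensionality => i; rewrite /P_tau -LeqU; case: (tau i).
    by rewrite -fixL.
  exact: Fm_const Hfix m.
have core n' j : (forall i : 'I_(m + k), A j <= X n' i /\ X n' i <= B j) ->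
    A j.+1 <= x (n' + K)%N /\ x (n' + K)%N <= B j.+1.
  move=> h; have [h1 h2] := band_le tau h; have [hA hB _ _ _] := inv j.
  rewrite HX AS BS; split; apply: mono => //; exact: PVg.
have band0 n : A 0%N <= x n /\ x n <= B 0%N.
  elim/ltn_ind: n => n IH; case: (ltnP n K) => hn.
    have hi : (K - 1 - n < m + k)%N by rewrite /K in hn *; lia.
    have := le_band HP1 HP2 (Ordinal hi); rewrite /X /=.
    by have -> : (0 + K - 1 - (K - 1 - n))%N = n by lia.
  have hidx (i : 'I_(m + k)) : (n - K + K - 1 - i < n)%N.
    move: (ltn_ord i) hn; rewrite /K; lia.
  rewrite -(subnK hn); have [hA hB _ h4 h5] := inv 0%N.
  have [c1 c2] := core (n - K)%N 0%N (fun i => IH _ (hidx i)).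
  split; [exact: le_trans h4 c1 | exact: le_trans c2 h5].
have band j n : (j * K <= n)%N -> A j <= x n /\ x n <= B j.
  elim: j n => [|j IH] n hn; first exact: band0.
  have hK : (K <= n)%N by move: hn; rewrite mulSn; lia.
  rewrite -(subnK hK); apply: core => i; apply: IH.
  move: (ltn_ord i) hn; rewrite mulSn /K; lia.
move=> eps He; have [j [h1 h2]] := close eps He.
exists (j * K)%N => n hn; have [c1 c2] := band j n hn.
rewrite -Lx ltr_norml; apply/andP; split; lra.
Qed.
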